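(* Let $G$ be a graph with at least one vertex and $f:V(G)\to\{1,2,3,\dots\}$. Then $\gamma_{gr}^{\times2}(G_f)\le2\gamma_{gr}(G)$. Moreover, there exists a GDDS $S=(v_1,\dots,v_{2k})$ of $G_f$ such that for each odd $i\in\{1,3,\dots,2k-1\}$, $v_i$ and $v_{i+1}$ are true twin vertices in $G_f$.
   Context: Graphs are finite, simple, undirected; $N[v]$ closed neighborhood; $x,y$ are true twins if $N[x]=N[y]$. $G_f$ is the graph with vertex set $\bigcup_{v\in V(G)}\{v^1,\dots,v^{f(v)+1}\}$ in which $v^iu^j$ is an edge iff either $v=u$ and $i\neq j$, or $vu\in E(G)$. A sequence $(v_1,\dots,v_k)$ of distinct vertices is legal if $N[v_i]\setminus\bigcup_{j<i}N[v_j]\neq\emptyset$ for $i\ge2$, and a dominating sequence if moreover its vertex set is dominating; $\gamma_{gr}(G)$ is the maximum length of a dominating sequence. A sequence of distinct vertices is a double neighborhood sequence if for each $i$ some $w\in N[v_i]$ satisfies $|\{j<i:w\in N[v_j]\}|\le1$, and a double dominating sequence (DDS) if moreover every vertex $w$ satisfies $|N[w]\cap\{v_1,\dots,v_k\}|\ge2$; a GDDS is a DDS of maximum length, this length being $\gamma_{gr}^{\times2}$. *)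

(* Defs.v *)
From mathcomp Require Import all_boot.
Set Implicit Arguments. Unset Strict Implicit. Unset Printing Implicit Defensive.

(* A simple graph is a symmetric irreflexive relation e on a finType T. *)

Section Defs.
Variables (T : finType) (e : rel T).

Definition cnbhd (v : T) : {set T} := [set u | (u == v) || e v u].

Definition true_twins (x y : T) : bool := cnbhd x == cnbhd y.

(* legality: each new vertex footprints a vertex not in the union D of the
   previous closed neighbourhoods *)
Fixpoint legal_from (D : {set T}) (s : seq T) : bool :=
  match s with
  | [::] => true
  | x :: s' => (cnbhd x :\: D != set0) && legal_from (D :|: cnbhd x) s'
  end.

Definition legal_seq (s : seq T) : bool :=
  uniq s && match s with [::] => true | x :: s' => legal_from (cnbhd x) s' end.

Definition dominating (A : {set T}) : bool :=
  [forall w, [exists v in A, w \in cnbhd v]].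

Definition dom_seq (s : seq T) : bool :=
  legal_seq s && dominating [set x | x \in s].

Definition grundy_dom : nat :=
  \max_(n < #|T|.+1 | [exists t : n.-tuple T, dom_seq t]) n.

(* double neighbourhood sequence: p is the prefix already chosen *)
Fixpoint dns_from (p : seq T) (s : seq T) : bool :=
  match s with
  | [::] => true
  | x :: s' =>
      [exists w in cnbhd x, count (fun y => w \in cnbhd y) p <= 1]
      && dns_from (rcons p x) s'
  end.

Definition double_nbhd_seq (s : seq T) : bool := uniq s && dns_from [::] s.

Definition double_dom_seq (s : seq T) : bool :=
  double_nbhd_seq s && [forall w, 2 <= #|cnbhd w :&: [set x | x \in s]|].

Definition grundy_double_dom : nat :=
  \max_(n < #|T|.+1 | [exists t : n.-tuple T, double_dom_seq t]) n.

Definition is_GDDS (s : seq T) : Prop :=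
  double_dom_seq s /\ size s = grundy_double_dom.

End Defs.

(* The graph G_f: vertex v^i for v in V(G), i in {0,..,f v} (f v + 1 copies),
   v^i u^j adjacent iff (v = u and i <> j) or vu in E(G). *)
Definition Gf_vert (T : finType) (f : T -> nat) : finType :=
  {v : T & 'I_(f v).+1}.

Definition Gf_edge (T : finType) (e : rel T) (f : T -> nat) : rel (Gf_vert f) :=
  fun a b => ((tag a == tag b) && (val (tagged a) != val (tagged b)))
             || e (tag a) (tag b).
Arguments Gf_vert : clear implicits.
Arguments Gf_edge {T} e f.

(* Main.v *)
Require Import Defs.
From mathcomp Require Import all_boot.
From mathcomp Require Import zify.
Set Implicit Arguments. Unset Strict Implicit. Unset Printing Implicit Defensive.

Section G.
Variables (T : finType) (e : rel T).

Definition UU (A : seq T) : {set T} := [set v | has (fun a => v \in cnbhd e a) A].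

Lemma cnbhd_self x : x \in cnbhd e x.
Proof. by rewrite /cnbhd inE eqxx. Qed.

Lemma legal_rcons D A x : legal_from e D (rcons A x) =
  legal_from e D A && (cnbhd e x :\: (D :|: UU A) != set0).
Proof.
elim: A D => [|y A IH] D /=.
  have -> : D :|: UU [::] = D by apply/setP=> v; rewrite /UU !inE /= orbF.
  by rewrite andbT.
rewrite IH; have -> : (D :|: cnbhd e y) :|: UU A = D :|: UU (y :: A).
  apply/setP => v; rewrite /UU !in_setU !in_set /=; rewrite [v \in cnbhd e y]inE; by rewrite !orbA.
by rewrite andbA.
Qed.

Lemma legal_notsub D s y : legal_from e D s -> y \in s -> ~~ (cnbhd e y \subset D).
Proof.
elim: s D => [|x s IH] D //= /andP[hx hs]; rewrite inE => /orP[/eqP->|ys].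
  by apply: contra hx; rewrite setD_eq0.
apply: contra (IH _ hs ys) => h; apply: subset_trans h _; exact: subsetUl.
Qed.

Lemma legal_uniq D s : legal_from e D s -> uniq s.
Proof.
elim: s D => [|x s IH] D //= /andP[hx hs]; rewrite (IH _ hs) andbT.
apply/negP => xs; have := legal_notsub hs xs; by rewrite subsetUr.
Qed.

Lemma legal_legal_seq s : legal_from e set0 s -> legal_seq e s.
Proof.
move=> h; rewrite /legal_seq (legal_uniq h); case: s h => //= x s /andP[_].
by rewrite set0U.
Qed.

Lemma legal_seq_legal s : legal_seq e s -> legal_from e set0 s.
Proof.
case: s => //= x s /andP[_ h]; rewrite set0U h andbT setD0.
by apply/set0Pn; exists x; rewrite cnbhd_self.
Qed.

Lemma extend n A : #|[set v | ~~ has (fun a => v \in cnbhd e a) A]| <= n ->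
  legal_from e set0 A ->
  exists s2, legal_from e set0 (A ++ s2) /\ dominating e [set x | x \in A ++ s2].
Proof.
elim: n A => [|n IH] A hc hl;
  (case: (pickP (fun w => ~~ has (fun a => w \in cnbhd e a) A)) => [w hw|none]).
- rewrite leqn0 cards_eq0 in hc; move/eqP: hc => hc.
  have : w \in [set v | ~~ has (fun a => v \in cnbhd e a) A] by rewrite inE.
  by rewrite hc inE.
- exists [::]; rewrite cats0; split => //; apply/forallP => w.
  have /negbFE/hasP[a ha hwa] := none w.
  by apply/existsP; exists a; rewrite inE ha hwa.
- have hp : [set v | ~~ has (fun a => v \in cnbhd e a) (rcons A w)]
     \proper [set v | ~~ has (fun a => v \in cnbhd e a) A].
    apply/properP; split.
      by apply/subsetP => v; rewrite !inE has_rcons negb_or => /andP[_ ->].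
    by exists w; rewrite !inE ?hw // has_rcons cnbhd_self.
  have hc' := leq_trans (proper_card hp) hc; rewrite ltnS in hc'.
  have hl' : legal_from e set0 (rcons A w).
    rewrite legal_rcons hl /=; apply/set0Pn; exists w.
    by rewrite !inE /UU (negbTE hw) eqxx.
  have [s2 [h1 h2]] := IH _ hc' hl'.
  by exists (w :: s2); rewrite -cat_rcons.
- exists [::]; rewrite cats0; split => //; apply/forallP => w.
  have /negbFE/hasP[a ha hwa] := none w.
  by apply/existsP; exists a; rewrite inE ha hwa.
Qed.

Lemma legal_le_grundy A : legal_from e set0 A -> size A <= grundy_dom e.
Proof.
move=> hl; have [s2 [h1 h2]] := extend (leqnn _) hl.
apply: (@leq_trans (size (A ++ s2))); first by rewrite size_cat leq_addr.
have hs : size (A ++ s2) < #|T|.+1.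
  by rewrite ltnS -(card_uniqP (legal_uniq h1)); exact: max_card.
apply: (@leq_bigmax_cond _ _ _ (Ordinal hs)) => /=.
apply/existsP; exists (in_tuple (A ++ s2)).
by rewrite /dom_seq legal_legal_seq.
Qed.

Lemma exists_max_dom : 0 < #|T| -> exists us, dom_seq e us /\ size us = grundy_dom e.
Proof.
move=> _.
have [s2 [h1 h2]] := @extend _ [::] (leqnn _) isT.
have hs : size s2 < #|T|.+1.
  by rewrite ltnS -(card_uniqP (legal_uniq h1)); exact: max_card.
have hP : [exists t : (Ordinal hs).-tuple T, dom_seq e t].
  by apply/existsP; exists (in_tuple s2); rewrite /dom_seq legal_legal_seq.
rewrite /grundy_dom (@bigmax_eq_arg _ (Ordinal hs) (fun n : 'I_#|T|.+1 => [exists t : n.-tuple T, dom_seq e t]) (fun i => nat_of_ord i) hP).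
case: arg_maxnP => // i /existsP[t ht] _.
by exists t; rewrite size_tuple.
Qed.

End G.

Section GF.
Variables (T : finType) (e : rel T) (f : T -> nat).
Hypothesis e_sym : symmetric e.
Hypothesis f_pos : forall v, 0 < f v.
Local Notation V := (Gf_vert T f).
Local Notation E := (Gf_edge e f).

Lemma inNGf (x y : V) : (x \in cnbhd E y) = (tag x \in cnbhd e (tag y)).
Proof.
rewrite /cnbhd !inE /Gf_edge.
case: x y => [a i] [b j] /=.
case: (eqVneq a b) => [eab|ab]; first subst b.
  by case: (eqVneq j i) => [->|->]; rewrite ?eqxx ?orbT.
have -> : (existT (fun v => 'I_(f v).+1) a i == existT _ b j) = false.
  apply/negP => /eqP h; move: ab; have /= -> := congr1 (@projT1 _ _) h; by rewrite eqxx.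
by [].
Qed.

Lemma N_sym (x y : T) : (x \in cnbhd e y) = (y \in cnbhd e x).
Proof. by rewrite /cnbhd !inE eq_sym e_sym. Qed.

Lemma split s (p : seq V) A B :
  dns_from E p s ->
  (forall v, count (fun y : V => v \in cnbhd e (tag y)) p =
     count (fun a => v \in cnbhd e a) A + count (fun a => v \in cnbhd e a) B) ->
  legal_from e set0 A -> legal_from e set0 B ->
  exists A' B', [/\ legal_from e set0 A', legal_from e set0 B' &
     size A' + size B' = size A + size B + size s].
Proof.
elim: s p A B => [|x s IH] p A B /=.
  by move=> _ _ hA hB; exists A, B; rewrite addn0.
case/andP => /existsP[w /andP[hw hc]] hs hcnt hA hB.
rewrite inNGf in hw.
have hc' : count (fun y : V => tag w \in cnbhd e (tag y)) p <= 1.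
  by rewrite -(eq_count (fun y => inNGf w y)).
rewrite hcnt in hc'.
have hcr : forall (q : seq V) z v, count (fun y : V => v \in cnbhd e (tag y)) (rcons q z) =
   count (fun y : V => v \in cnbhd e (tag y)) q + (v \in cnbhd e (tag z)).
  by move=> q z v; rewrite -cats1 count_cat /= addn0.
have hcr' : forall (q : seq T) z v, count (fun a => v \in cnbhd e a) (rcons q z) =
   count (fun a => v \in cnbhd e a) q + (v \in cnbhd e z).
  by move=> q z v; rewrite -cats1 count_cat /= addn0.
case hA0 : (count (fun a => tag w \in cnbhd e a) A == 0).
- have hl : legal_from e set0 (rcons A (tag x)).
    rewrite legal_rcons hA /=; apply/set0Pn; exists (tag w).
    rewrite in_setD hw andbT /UU !inE has_count.
    by move/eqP: hA0 => ->.
  have hinv : forall v, count (fun y : V => v \in cnbhd e (tag y)) (rcons p x) =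
     count (fun a => v \in cnbhd e a) (rcons A (tag x)) + count (fun a => v \in cnbhd e a) B.
    move=> v; by rewrite hcr hcr' hcnt addnAC.
  have [A' [B' [h1 h2 h3]]] := IH (rcons p x) (rcons A (tag x)) B hs hinv hl hB.
  exists A', B'; split => //; by rewrite h3 size_rcons !addSn addnS.
- have hB0 : count (fun a => tag w \in cnbhd e a) B == 0.
    move/negbT: hA0; lia.
  have hl : legal_from e set0 (rcons B (tag x)).
    rewrite legal_rcons hB /=; apply/set0Pn; exists (tag w).
    rewrite in_setD hw andbT /UU !inE has_count.
    by move/eqP: hB0 => ->.
  have hinv : forall v, count (fun y : V => v \in cnbhd e (tag y)) (rcons p x) =
     count (fun a => v \in cnbhd e a) A + count (fun a => v \in cnbhd e a) (rcons B (tag x)).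
    by move=> v; rewrite hcr hcr' hcnt addnA.
  have [A' [B' [h1 h2 h3]]] := IH (rcons p x) A (rcons B (tag x)) hs hinv hA hl.
  exists A', B'; split => //; by rewrite h3 size_rcons !addnS !addSn.
Qed.

Lemma dns_le t : dns_from E [::] t -> size t <= 2 * grundy_dom e.
Proof.
move=> h; have [A [B [hA hB hs]]] := @split t [::] [::] [::] h (fun v => erefl) isT isT.
have := legal_le_grundy hA; have := legal_le_grundy hB; move: hs => /=; lia.
Qed.


Definition c0 (u : T) : V := existT (fun v => 'I_(f v).+1) u ord0.
Definition c1 (u : T) : V := existT (fun v => 'I_(f v).+1) u (Ordinal (f_pos u : 1 < (f u).+1)).

Fixpoint dbl (us : seq T) : seq V :=
  if us is u :: us' then c0 u :: c1 u :: dbl us' else [::].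

Lemma c01 u : c0 u != c1 u.
Proof. by apply/negP => /eqP h; have := congr1 (fun z : V => val (tagged z)) h. Qed.

Lemma tag_dbl us x : x \in dbl us -> tag x \in us.
Proof.
elim: us => [|u us IH] //=; rewrite !inE => /orP[/eqP->|/orP[/eqP->|/IH->]];
  by rewrite ?eqxx ?orbT.
Qed.

Lemma uniq_dbl us : uniq us -> uniq (dbl us).
Proof.
elim: us => [|u us IH] //= /andP[hu hus]; rewrite IH // andbT inE negb_or c01 /=.
by apply/andP; split; apply/negP => /tag_dbl /=; apply/negP.
Qed.

Lemma size_dbl us : size (dbl us) = 2 * size us.
Proof. by elim: us => [|u us IH] //=; rewrite IH mulnS add2n. Qed.

Lemma mem_dbl us v : v \in us -> (c0 v \in dbl us) && (c1 v \in dbl us).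
Proof.
elim: us => [|u us IH] //=; rewrite inE => /orP[/eqP->|/IH/andP[h1 h2]].
  by rewrite !inE !eqxx /= orbT.
by rewrite !inE h1 h2 !orbT.
Qed.

Lemma nth_dbl us x0 i : i < size us ->
  tag (nth x0 (dbl us) (2 * i)) = tag (nth x0 (dbl us) (2 * i).+1).
Proof.
elim: us i => [|u us IH] [|i] // hi.
by rewrite mulnS add2n; apply: IH.
Qed.

Lemma dns_dbl (us : seq T) (p : seq V) (D : {set T}) : (forall v, (v \in D) = has (fun y : V => v \in cnbhd e (tag y)) p) ->
  legal_from e D us -> dns_from E p (dbl us).
Proof.
elim: us p D => [|u us IH] p D hD //= /andP[/set0Pn[v hv] hl].
rewrite in_setD in hv; case/andP: hv => hvD hvu.
have hc : count (fun y => c0 v \in cnbhd E y) p = 0.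
  rewrite (eq_count (fun y => inNGf (c0 v) y)) /=.
  apply/eqP; rewrite -leqn0 leqNgt -has_count -hD; exact: hvD.
have hw : c0 v \in cnbhd E (c0 u) by rewrite inNGf.
have hw' : c0 v \in cnbhd E (c1 u) by rewrite inNGf.
apply/andP; split.
  by apply/existsP; exists (c0 v); rewrite hw hc.
apply/andP; split.
  apply/existsP; exists (c0 v); rewrite hw' -cats1 count_cat hc /= hw.
  by [].
apply: (IH _ (D :|: cnbhd e u)) => // v'.
rewrite in_setU hD -!cats1 !has_cat /= !orbF -orbA orbb.
by [].
Qed.

Lemma ddom_dbl us : dominating e [set x | x \in us] ->
  forall w, 2 <= #|cnbhd E w :&: [set x | x \in dbl us]|.
Proof.
move=> /forallP hd w; have /existsP[v /andP[]] := hd (tag w).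
rewrite inE => vus hv.
have sub : [set c0 v; c1 v] \subset cnbhd E w :&: [set x | x \in dbl us].
  have /andP[m0 m1] := mem_dbl vus.
  apply/subsetP => z /set2P[]->;
    by rewrite in_setI inNGf /= N_sym hv inE ?m0 ?m1.
apply: leq_trans (subset_leq_card sub); by rewrite cards2 c01.
Qed.

Lemma twins_tag (x y : V) : tag x = tag y -> true_twins E x y.
Proof.
move=> h; apply/eqP/setP => z.
by rewrite inNGf inNGf h.
Qed.

End GF.

Theorem lemma3 (T : finType) (e : rel T) (f : T -> nat)
  (e_sym : symmetric e) (e_irr : irreflexive e)
  (T_ne : 0 < #|T|) (f_pos : forall v, 0 < f v) :
  grundy_double_dom (Gf_edge e f) <= 2 * grundy_dom e /\
  exists (s : seq (Gf_vert T f)) (k : nat),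
    is_GDDS (Gf_edge e f) s /\ size s = 2 * k /\
    forall i, i < k ->
      forall x0 : Gf_vert T f,
        true_twins (Gf_edge e f) (nth x0 s (2 * i)) (nth x0 s (2 * i).+1).
Proof.
have ub : grundy_double_dom (Gf_edge e f) <= 2 * grundy_dom e.
  apply/bigmax_leqP => i /existsP[t /andP[/andP[_ hd] _]].
  by rewrite -(size_tuple t); apply: dns_le.
split => //.
have [us [/andP[hl hdom] hsz]] := exists_max_dom e T_ne.
have hdds : double_dom_seq (Gf_edge e f) (dbl f_pos us).
  rewrite /double_dom_seq /double_nbhd_seq uniq_dbl ?(legal_uniq (legal_seq_legal hl)) //=.
  rewrite (@dns_dbl T e f f_pos us [::] set0) ?legal_seq_legal //=.
    by apply/forallP => w; apply: ddom_dbl.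
  by move=> v; rewrite inE.
have hs : size (dbl f_pos us) < #|Gf_vert T f|.+1.
  rewrite ltnS -(card_uniqP (uniq_dbl f_pos (legal_uniq (legal_seq_legal hl)))).
  exact: max_card.
have lb : size (dbl f_pos us) <= grundy_double_dom (Gf_edge e f).
  apply: (@leq_bigmax_cond _ _ _ (Ordinal hs)) => /=.
  by apply/existsP; exists (in_tuple (dbl f_pos us)).
exists (dbl f_pos us), (size us); split; last split.
- split => //; apply/eqP; rewrite eqn_leq lb /=.
  by rewrite size_dbl hsz.
- exact: size_dbl.
- move=> i hi x0; apply: twins_tag; exact: nth_dbl.
Qed.
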